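(* In the setting described in the context, let $\Delta'$ be the orthogonal projector onto $\operatorname{span}\{\ket{\psi_x'}:f(x)=1\}$ and $R=2\Delta'-I$. If $\varepsilon\kappa<1/12$, then for every $x$ with $f(x)=0$, $\|(I+R)\ket{\phi_x'}\|\le 8\varepsilon(c+1)A\sqrt{\kappa}$.
   Context: Let $X\subseteq\{0,1\}^n$, $f:X\to\{0,1\}$, $c>0$, and let $\{\ket{v_{x,i}}\in\mathbb{R}^m\}_{x\in X,i\in[n]}$ be a real $f$-deciding vector set, i.e. $\sum_{i:x_i\ne y_i}\braket{v_{x,i}}{v_{y,i}}=1$ whenever $f(x)\ne f(y)$, with size $A=\max_x\sum_i\|\ket{v_{x,i}}\|^2$. Let $\mathcal{H}=\mathbb{R}\oplus(\mathbb{R}^n\otimes\mathbb{R}^m\otimes\mathbb{R}^2)$ with $\ket{\hat0}$ a unit vector spanning the first summand. For $f(x)=1$ let $\ket{\psi_x}=\frac{1}{\sqrt{\nu_x}}\big(\ket{\hat0}+\frac{1}{\sqrt{cA}}\sum_i\ket{i}\ket{v_{x,i}}\ket{x_i}\big)$ with $\nu_x$ chosen so $\|\ket{\psi_x}\|=1$; for $f(x)=0$ let $\ket{\phi_x}=\frac{1}{\sqrt{\mu_x}}\big(\ket{\hat0}-\sqrt{cA}\sum_i\ket{i}\ket{v_{x,i}}\ket{\bar x_i}\big)$ with $\mu_x$ chosen so $\|\ket{\phi_x}\|=1$, $\bar x_i=1-x_i$. Let $\kappa=\dim\operatorname{span}\{\ket{\psi_x}:f(x)=1\}$, $\{\ket{\zeta_j}\}_{j\in[\kappa]}$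 an orthonormal basis of it, with fixed real $\alpha_{j,x}$ such that $\ket{\zeta_j}=\sum_{x:f(x)=1}\alpha_{j,x}\ket{\psi_x}$. Let $\ket{C_{j,i,b}}=\sum_{x:f(x)=1,x_i=b}\frac{\alpha_{j,x}}{\sqrt{\nu_x}}\ket{v_{x,i}}$ and $V=\{\ket{C_{j,i,b}}\}_{j,i,b}\cup\{\ket{v_{y,i}}:f(y)=0,i\in[n]\}$. Let $\varepsilon>0$ and $S\in\mathbb{R}^{N\times m}$ satisfy $(1-\varepsilon)\|u-v\|^2\le\|Su-Sv\|^2\le(1+\varepsilon)\|u-v\|^2$ for all $u,v\in V\cup\{0\}$. Let $T=\ket{\hat0}\bra{\hat0}+I_n\otimes S\otimes I_2$ and $\ket{\psi_x'}=T\ket{\psi_x}$, $\ket{\phi_x'}=T\ket{\phi_x}$. *)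

(* Defs.v *)
From HB Require Import structures.
From mathcomp Require Import all_boot all_order all_algebra.
From mathcomp Require Import mxtens.
From mathcomp Require Import reals.
Set Implicit Arguments. Unset Strict Implicit. Unset Printing Implicit Defensive.
Import Order.TTheory GRing.Theory Num.Theory.
Local Open Scope ring_scope.

Definition bitstr (n : nat) := {ffun 'I_n -> bool}.

Section Defs.
Variable R : realType.

Definition dotv {k} (u w : 'cV[R]_k) : R := \sum_(i < k) u i 0 * w i 0.
Definition normv {k} (u : 'cV[R]_k) : R := Num.sqrt (dotv u u).

Definition ket {k} (i : 'I_k) : 'cV[R]_k := delta_mx i 0.
Definition ketb (b : bool) : 'cV[R]_2 := delta_mx (inord (nat_of_bool b) : 'I_2) 0.

(* H_d = R (+) (R^n (x) R^d (x) R^2), realised as R^(1 + n*d*2) *)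
Definition hat0 {n d} : 'cV[R]_(1 + n * d * 2) := col_mx 1%:M 0.
Definition tket {n d} (i : 'I_n) (v : 'cV[R]_d) (b : bool)
  : 'cV[R]_(1 + n * d * 2) := col_mx 0 (ket i *t v *t ketb b).

Definition Tmap {n m N} (S : 'M[R]_(N, m))
  : 'M[R]_(1 + n * N * 2, 1 + n * m * 2) :=
  block_mx 1%:M 0 0 (1%:M *t S *t 1%:M).

Definition deciding {n m} (X : {set bitstr n}) (f : bitstr n -> bool)
  (v : bitstr n -> 'I_n -> 'cV[R]_m) : Prop :=
  forall x y, x \in X -> y \in X -> f x != f y ->
    \sum_(i < n | x i != y i) dotv (v x i) (v y i) = 1.

Definition vsize {n m} (X : {set bitstr n}) (v : bitstr n -> 'I_n -> 'cV[R]_m) : R :=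
  \big[Num.max/0]_(x in X) \sum_(i < n) normv (v x i) ^+ 2.

Definition psi_un {n m} (c A : R) (v : bitstr n -> 'I_n -> 'cV[R]_m) x
  : 'cV[R]_(1 + n * m * 2) :=
  hat0 + (Num.sqrt (c * A))^-1 *: \sum_(i < n) tket i (v x i) (x i).
Definition phi_un {n m} (c A : R) (v : bitstr n -> 'I_n -> 'cV[R]_m) x
  : 'cV[R]_(1 + n * m * 2) :=
  hat0 - Num.sqrt (c * A) *: \sum_(i < n) tket i (v x i) (~~ x i).

Definition nu {n m} c A v x := dotv (@psi_un n m c A v x) (psi_un c A v x).
Definition mu {n m} c A v x := dotv (@phi_un n m c A v x) (phi_un c A v x).
Definition psi {n m} c A v x := (Num.sqrt (@nu n m c A v x))^-1 *: psi_un c A v x.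
Definition phi {n m} c A v x := (Num.sqrt (@mu n m c A v x))^-1 *: phi_un c A v x.

Definition psi_span {n m} (X : {set bitstr n}) (f : bitstr n -> bool) c A v
  : {vspace 'cV[R]_(1 + n * m * 2)} :=
  <<[seq @psi n m c A v x | x <- enum X & f x]>>%VS.

Definition orth_proj {k} (W : {vspace 'cV[R]_k}) (P : 'M[R]_k) : Prop :=
  forall u, P *m u \in W /\ forall w, w \in W -> dotv w (u - P *m u) = 0.

End Defs.

(* Main.v *)
Require Import Defs.
From HB Require Import structures.
From mathcomp Require Import all_boot all_order all_algebra.
From mathcomp Require Import mxtens reals.
From mathcomp Require Import ring lra.
Set Implicit Arguments. Unset Strict Implicit. Unset Printing Implicit Defensive.
Import Order.TTheory GRing.Theory Num.Theory.
Local Open Scope ring_scope.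


Section L.
Variable R : realType.

Lemma dotvE k (u w : 'cV[R]_k) : dotv u w = (u^T *m w) 0 0.
Proof. by rewrite /dotv !mxE; apply: eq_bigr => i _; rewrite mxE. Qed.

Lemma dotvC k (u w : 'cV[R]_k) : dotv u w = dotv w u.
Proof. by rewrite /dotv; apply: eq_bigr => i _; rewrite mulrC. Qed.

Lemma dotvDl k (u u' w : 'cV[R]_k) : dotv (u + u') w = dotv u w + dotv u' w.
Proof. by rewrite /dotv -big_split; apply: eq_bigr => i _; rewrite mxE mulrDl. Qed.

Lemma dotvZl k a (u w : 'cV[R]_k) : dotv (a *: u) w = a * dotv u w.
Proof. by rewrite /dotv mulr_sumr; apply: eq_bigr => i _; rewrite mxE mulrA. Qed.

Lemma dotv0l k (w : 'cV[R]_k) : dotv 0 w = 0.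
Proof. by rewrite /dotv big1 // => i _; rewrite mxE mul0r. Qed.

Lemma dotvNl k (u w : 'cV[R]_k) : dotv (- u) w = - dotv u w.
Proof. by rewrite -scaleN1r dotvZl mulN1r. Qed.

Lemma dotvBl k (u u' w : 'cV[R]_k) : dotv (u - u') w = dotv u w - dotv u' w.
Proof. by rewrite dotvDl dotvNl. Qed.

Lemma dotvDr k (u w w' : 'cV[R]_k) : dotv u (w + w') = dotv u w + dotv u w'.
Proof. by rewrite dotvC dotvDl !(dotvC _ u). Qed.
Lemma dotvZr k a (u w : 'cV[R]_k) : dotv u (a *: w) = a * dotv u w.
Proof. by rewrite dotvC dotvZl dotvC. Qed.
Lemma dotvBr k (u w w' : 'cV[R]_k) : dotv u (w - w') = dotv u w - dotv u w'.
Proof. by rewrite dotvC dotvBl !(dotvC _ u). Qed.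
Lemma dotv0r k (w : 'cV[R]_k) : dotv w 0 = 0.
Proof. by rewrite dotvC dotv0l. Qed.

Lemma dotv_suml k (I : Type) (r : seq I) (P : pred I) (F : I -> 'cV[R]_k) w :
  dotv (\sum_(i <- r | P i) F i) w = \sum_(i <- r | P i) dotv (F i) w.
Proof.
by rewrite (big_morph (fun u => dotv u w) (fun u u' => dotvDl u u' w) (dotv0l w)).
Qed.
Lemma dotv_sumr k (I : Type) (r : seq I) (P : pred I) (F : I -> 'cV[R]_k) w :
  dotv w (\sum_(i <- r | P i) F i) = \sum_(i <- r | P i) dotv w (F i).
Proof.
by rewrite dotvC dotv_suml; apply: eq_bigr => i _; rewrite dotvC.
Qed.

Lemma dotv_ge0 k (u : 'cV[R]_k) : 0 <= dotv u u.
Proof. by rewrite /dotv sumr_ge0 // => i _; rewrite -expr2 sqr_ge0. Qed.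

Lemma normv2 k (u : 'cV[R]_k) : normv u ^+ 2 = dotv u u.
Proof. by rewrite /normv sqr_sqrtr // dotv_ge0. Qed.

Lemma dotv_eq0 k (u : 'cV[R]_k) : dotv u u = 0 -> u = 0.
Proof.
move=> /eqP; rewrite /dotv psumr_eq0 => [/allP H|i _]; last by rewrite -expr2 sqr_ge0.
apply/matrixP => i j; rewrite [j]ord1 mxE.
by have /implyP/(_ isT) := H i (mem_index_enum _); rewrite mulf_eq0 orbb => /eqP.
Qed.

Lemma tens3_11 (P Q Z : 'M[R]_1) i j : (P *t Q *t Z) i j = P 0 0 * Q 0 0 * Z 0 0.
Proof.
have E : forall (M : 'M[R]_1) a b, M a b = M 0 0 by move=> M a b; rewrite [a]ord1 [b]ord1.
by rewrite !mxE (E P) (E Q) (E Z).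
Qed.

Lemma ket_dot k (i i' : 'I_k) : dotv (ket R i) (ket R i') = (i == i')%:R.
Proof.
rewrite /dotv (bigD1 i) //= big1 => [|l /negbTE li]; last by rewrite /ket !mxE li mul0r.
by rewrite /ket !mxE !eqxx /= mul1r addr0 andbT eq_sym.
Qed.

Lemma ketb_dot b b' : dotv (ketb R b) (ketb R b') = (b == b')%:R.
Proof.
rewrite /ketb -/(ket R _) ket_dot.
case: b; case: b' => /=; rewrite ?eqxx //.
all: rewrite (_ : (_ == _) = false) //; apply/eqP => H; have := congr1 (@nat_of_ord 2) H; rewrite !inordK //.
Qed.


Lemma tensmxDr m1 n1 p q (A : 'M[R]_(m1,n1)) (B C : 'M[R]_(p,q)) : A *t (B + C) = A *t B + A *t C.
Proof. by apply/matrixP => i j; rewrite !mxE mulrDr. Qed.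
Lemma tensmxDl m1 n1 p q (A B : 'M[R]_(m1,n1)) (C : 'M[R]_(p,q)) : (A + B) *t C = A *t C + B *t C.
Proof. by apply/matrixP => i j; rewrite !mxE mulrDl. Qed.
Lemma tensmxZr m1 n1 p q a (A : 'M[R]_(m1,n1)) (B : 'M[R]_(p,q)) : A *t (a *: B) = a *: (A *t B).
Proof. by apply/matrixP => i j; rewrite !mxE mulrCA. Qed.
Lemma tensmxZl m1 n1 p q a (A : 'M[R]_(m1,n1)) (B : 'M[R]_(p,q)) : (a *: A) *t B = a *: (A *t B).
Proof. by apply/matrixP => i j; rewrite !mxE mulrA. Qed.

Variable n : nat.

Lemma tketD d (i : 'I_n) (u w : 'cV[R]_d) b : tket i (u + w) b = tket i u b + tket i w b.
Proof. by rewrite /tket tensmxDr tensmxDl add_col_mx addr0. Qed.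
Lemma tketZ d (i : 'I_n) a (u : 'cV[R]_d) b : tket i (a *: u) b = a *: tket i u b.
Proof. by rewrite /tket tensmxZr tensmxZl scale_col_mx scaler0. Qed.
Lemma tket0 d (i : 'I_n) b : tket i (0 : 'cV[R]_d) b = 0.
Proof. by rewrite /tket tensmx0 tens0mx col_mx0. Qed.
Lemma tket_sum d (i : 'I_n) b (I : Type) (r : seq I) (P : pred I) (F : I -> 'cV[R]_d) :
  tket i (\sum_(x <- r | P x) F x) b = \sum_(x <- r | P x) tket i (F x) b.
Proof. by rewrite (big_morph (fun u => tket i u b) (fun u w => tketD i u w b) (tket0 d i b)). Qed.

Lemma hat_hat d : dotv (@hat0 R n d) (hat0 R) = 1.
Proof. by rewrite dotvE /hat0 tr_col_mx mul_row_col trmx1 mul1mx trmx0 mul0mx addr0 mxE. Qed.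

Lemma hat_tket d (i : 'I_n) (u : 'cV[R]_d) b : dotv (hat0 R) (tket i u b) = 0.
Proof. by rewrite dotvE /hat0 /tket tr_col_mx mul_row_col mulmx0 trmx0 mul0mx addr0 mxE. Qed.

Lemma tket_hat d (i : 'I_n) (u : 'cV[R]_d) b : dotv (tket i u b) (hat0 R) = 0.
Proof. by rewrite dotvC hat_tket. Qed.

Lemma tens_dot3 d (a a' : 'cV[R]_n) (u w : 'cV[R]_d) (e e' : 'cV[R]_2) i j :
  ((a *t u *t e)^T *m (a' *t w *t e')) i j = dotv a a' * dotv u w * dotv e e'.
Proof. by rewrite !trmx_tens !tensmx_mul tens3_11 -!dotvE. Qed.

Lemma tket_tket d (i i' : 'I_n) (u w : 'cV[R]_d) b b' :
  dotv (tket i u b) (tket i' w b') = (i == i')%:R * ((b == b')%:R * dotv u w).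
Proof.
rewrite dotvE /tket tr_col_mx mul_row_col trmx0 mul0mx add0r.
transitivity (dotv (ket R i) (ket R i') * dotv u w * dotv (ketb R b) (ketb R b')).
  exact: tens_dot3.
by rewrite ket_dot ketb_dot -mulrA [dotv u w * _]mulrC.
Qed.

Lemma sum_delta (I : finType) (i : I) (F : I -> R) : \sum_j (i == j)%:R * F j = F i.
Proof.
rewrite (bigD1 i) //= big1 ?addr0 ?eqxx ?mul1r // => j /negbTE.
by rewrite eq_sym => ->; rewrite mul0r.
Qed.

Lemma T_hat m N (S : 'M[R]_(N, m)) : (@Tmap R n m N S) *m hat0 R = hat0 R.
Proof. by rewrite /Tmap /hat0 mul_block_col !mul0mx mulmx0 !addr0 mul1mx. Qed.

Lemma tens_mul3 m N (S : 'M[R]_(N, m)) (a : 'cV[R]_n) (u : 'cV[R]_m) (e : 'cV[R]_2) :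
  (1%:M *t S *t 1%:M) *m (a *t u *t e) = a *t (S *m u) *t e.
Proof. by rewrite !tensmx_mul !mul1mx. Qed.

Lemma T_tket m N (S : 'M[R]_(N, m)) (i : 'I_n) u b :
  (@Tmap R n m N S) *m tket i u b = tket i (S *m u) b.
Proof.
rewrite /Tmap /tket mul_block_col !mulmx0 mul0mx !add0r; congr col_mx.
exact: tens_mul3.
Qed.

Definition mk d (a : R) (g : 'I_n -> bool -> 'cV[R]_d) : 'cV[R]_(1 + n * d * 2) :=
  a *: hat0 R + \sum_i \sum_b tket i (g i b) b.

Lemma dot_mk d a a' (g g' : 'I_n -> bool -> 'cV[R]_d) :
  dotv (mk a g) (mk a' g') = a * a' + \sum_i \sum_b dotv (g i b) (g' i b).
Proof.
rewrite /mk dotvDl dotvZl dotvDr dotvZr hat_hat mulr1 dotv_sumr.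
rewrite big1 ?mulr0 ?addr0; last by move=> i _; rewrite dotv_sumr big1 // => b _; rewrite hat_tket.
rewrite dotv_suml; congr (_ + _); apply: eq_bigr => i _; rewrite dotv_suml; apply: eq_bigr => b _.
rewrite dotvDr dotvZr tket_hat mulr0 add0r.
rewrite dotv_sumr (eq_bigr (fun i' => (i == i')%:R * \sum_b' ((b == b')%:R * dotv (g i b) (g' i' b')))).
  by rewrite (sum_delta i (fun i' => \sum_b' ((b == b')%:R * dotv (g i b) (g' i' b')))) sum_delta.
by move=> i' _; rewrite dotv_sumr mulr_sumr; apply: eq_bigr => b' _; rewrite tket_tket.
Qed.

Lemma mk_scale d c a (g : 'I_n -> bool -> 'cV[R]_d) :
  c *: mk a g = mk (c * a) (fun i b => c *: g i b).
Proof.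
rewrite /mk scalerDr scalerA scaler_sumr; congr (_ + _); apply: eq_bigr => i _.
by rewrite scaler_sumr; apply: eq_bigr => b _; rewrite tketZ.
Qed.

Lemma mk_sum d (I : Type) (r : seq I) (P : pred I) (a : I -> R) (g : I -> 'I_n -> bool -> 'cV[R]_d) :
  \sum_(x <- r | P x) mk (a x) (g x) =
  mk (\sum_(x <- r | P x) a x) (fun i b => \sum_(x <- r | P x) g x i b).
Proof.
rewrite /mk big_split /= -scaler_suml; congr (_ + _).
rewrite exchange_big; apply: eq_bigr => i _; rewrite exchange_big; apply: eq_bigr => b _.
by rewrite tket_sum.
Qed.

Lemma mk1 d a (h : 'I_n -> 'cV[R]_d) (t : 'I_n -> bool) :
  a *: hat0 R + \sum_i tket i (h i) (t i) = mk a (fun i b => (t i == b)%:R *: h i).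
Proof.
rewrite /mk; congr (_ + _); apply: eq_bigr => i _.
rewrite (bigD1 (t i)) //= eqxx scale1r big1 ?addr0 // => b /negbTE.
by rewrite eq_sym => ->; rewrite scale0r tket0.
Qed.

Lemma T_mk m N (S : 'M[R]_(N, m)) a g :
  (@Tmap R n m N S) *m mk a g = mk a (fun i b => S *m g i b).
Proof.
rewrite /mk mulmxDr -scalemxAr T_hat mulmx_sumr; congr (_ + _).
by apply: eq_bigr => i _; rewrite mulmx_sumr; apply: eq_bigr => b _; rewrite T_tket.
Qed.

End L.


Section D.
Variable R : realType.

Definition JLp m N (S : 'M[R]_(N,m)) eps (a b : 'cV[R]_m) :=
  (1 - eps) * normv (a - b) ^+ 2 <= normv (S *m a - S *m b) ^+ 2 /\
  normv (S *m a - S *m b) ^+ 2 <= (1 + eps) * normv (a - b) ^+ 2.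

Lemma distort m N (S : 'M[R]_(N,m)) eps (u w : 'cV[R]_m) :
  0 < eps -> JLp S eps u 0 -> JLp S eps w 0 -> JLp S eps u w ->
  `|dotv (S *m u) (S *m w) - dotv u w| <= 2 * eps * (dotv u u + dotv w w).
Proof.
rewrite /JLp !normv2 !mulmx0 !subr0 -mulmxBr => ep [u1 u2] [w1 w2] [d1 d2].
move: d1 d2; rewrite mulmxBr !dotvBl !dotvBr (dotvC w u) (dotvC (S *m w) (S *m u)) => d1 d2.
have p : 0 <= dotv (u + w) (u + w) by apply: dotv_ge0.
move: p; rewrite !dotvDl !dotvDr (dotvC w u) => p.
set hu := dotv u u in u1 u2 d1 d2 p *.
set hw := dotv w w in w1 w2 d1 d2 p *.
set uw := dotv u w in d1 d2 p *.
have f : eps * (hu - uw - (uw - hw)) <= eps * (2 * (hu + hw)).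
  by apply: ler_wpM2l; [lra | lra].
rewrite ler_norml; apply/andP; split; nra.
Qed.


Lemma sconst k (c : R) : \sum_(l < k) c = k%:R * c.
Proof. by rewrite sumr_const card_ord mulr_natl. Qed.

Lemma cs_sum k (a : 'I_k -> R) : (\sum_j a j) ^+ 2 <= k%:R * \sum_j a j ^+ 2.
Proof.
have H : 0 <= \sum_j \sum_l (a j - a l) ^+ 2 by do 2 (apply: sumr_ge0 => ? _); apply: sqr_ge0.
have E : \sum_j \sum_l (a j - a l) ^+ 2 =
   2%:R * (k%:R * \sum_j a j ^+ 2) - 2%:R * (\sum_j a j) ^+ 2.
  transitivity (\sum_(j < k) \sum_(l < k) (a j ^+ 2 + a l ^+ 2 - 2%:R * (a j * a l))).
    by apply: eq_bigr => j _; apply: eq_bigr => l _; ring.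
  under eq_bigr do rewrite sumrB big_split /= sconst -mulr_sumr -mulr_sumr.
  rewrite sumrB big_split /= sconst -!mulr_sumr -mulr_suml -expr2; ring.
move: H; rewrite E; lra.
Qed.

Lemma gram_lb k (beta : 'I_k -> R) (G : 'I_k -> 'I_k -> R) (e : R) :
  (forall j l, `|G j l - (j == l)%:R| <= e) ->
  \sum_j beta j ^+ 2 - e * (\sum_j `|beta j|) ^+ 2 <=
  \sum_j \sum_l beta j * beta l * G j l.
Proof.
move=> HG.
have E1 : \sum_j \sum_l beta j * beta l * G j l =
  \sum_j beta j ^+ 2 + \sum_j \sum_l beta j * beta l * (G j l - (j == l)%:R).
  rewrite -big_split /=; apply: eq_bigr => j _.
  rewrite (_ : \sum_l beta j * beta l * G j l = \sum_l (beta j * beta l * (G j l - (j == l)%:R) + (j == l)%:R * (beta j * beta l))); last by apply: eq_bigr => l _; ring.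
  by rewrite big_split /= sum_delta -expr2 addrC.
have E2 : (\sum_j `|beta j|) ^+ 2 = \sum_j \sum_l `|beta j| * `|beta l|.
  by rewrite expr2 mulr_suml; apply: eq_bigr => j _; rewrite mulr_sumr.
have K : - (e * \sum_j \sum_l `|beta j| * `|beta l|) <=
    \sum_j \sum_l beta j * beta l * (G j l - (j == l)%:R).
  rewrite mulr_sumr -sumrN; apply: ler_sum => j _; rewrite mulr_sumr -sumrN; apply: ler_sum => l _.
  have : `|beta j * beta l * (G j l - (j == l)%:R)| <= e * (`|beta j| * `|beta l|).
    by rewrite !normrM mulrC ler_wpM2r // mulr_ge0.
  by rewrite ler_norml => /andP [h _].
rewrite E1 E2; lra.
Qed.

Lemma final_alg (D s Q B kap eps : R) :
  D <= s * B -> Q - 4%:R * eps * s ^+ 2 <= D -> s ^+ 2 <= kap * Q ->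
  eps * kap < 1 / 12%:R -> 0 < eps -> 0 <= s -> 0 <= B -> 0 <= kap ->
  D <= 3%:R / 2%:R * kap * B ^+ 2.
Proof.
move=> h1 h2 h3 h4 e0 s0 B0 k0.
have h5 : 2%:R / 3%:R * s ^+ 2 <= kap * s * B.
  have : kap * (Q - 4%:R * eps * s ^+ 2) <= kap * D by apply: ler_wpM2l.
  have : kap * D <= kap * (s * B) by apply: ler_wpM2l.
  have : 0 <= s ^+ 2 by apply: sqr_ge0.
  have : eps * kap * s ^+ 2 <= 1 / 12%:R * s ^+ 2 by apply: ler_wpM2r; [apply: sqr_ge0| lra].
  nra.
have [sz|sp] := eqVneq s 0.
  move: h1; rewrite sz mul0r => h1; have : 0 <= kap * B ^+ 2 by rewrite mulr_ge0 // sqr_ge0.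
  lra.
have sp' : 0 < s by rewrite lt_def sp s0.
have h6 : s <= 3%:R / 2%:R * kap * B.
  have : s * (2%:R / 3%:R * s) <= s * (kap * B) by rewrite mulrA mulrCA -expr2 mulrA; lra.
  by rewrite ler_pM2l // => h; lra.
have : s * B <= 3%:R / 2%:R * kap * B * B by apply: ler_wpM2r.
rewrite expr2; lra.
Qed.

End D.


Lemma eq_mk (R : realType) n d a (g g' : 'I_n -> bool -> 'cV[R]_d) :
  (forall i b, g i b = g' i b) -> mk a g = mk a g'.
Proof. by move=> H; rewrite /mk; congr (_ + _); apply: eq_bigr => i _; apply: eq_bigr => b _; rewrite H. Qed.

Lemma vsize_ge0 (R : realType) n m (X : {set bitstr n}) (v : bitstr n -> 'I_n -> 'cV[R]_m) :
  0 <= vsize X v.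
Proof.
rewrite /vsize; apply: (big_ind (fun z : R => 0 <= z)) => //.
  by move=> a b ha hb; rewrite le_max ha.
by move=> z _; apply: sumr_ge0 => i _; apply: sqr_ge0.
Qed.

Lemma vsize_ub (R : realType) n m (X : {set bitstr n}) (v : bitstr n -> 'I_n -> 'cV[R]_m) y :
  y \in X -> \sum_i dotv (v y i) (v y i) <= vsize X v.
Proof.
move=> yX; rewrite /vsize (bigD1 y) //= le_max; apply/orP; left.
by rewrite le_eqVlt; apply/orP; left; apply/eqP; apply: eq_bigr => i _; rewrite normv2.
Qed.

Lemma sum2_lin (R : realType) (I J : finType) (p q : R) (F G : I -> J -> R) :
  \sum_i \sum_b (p * F i b + q * G i b) = p * (\sum_i \sum_b F i b) + q * (\sum_i \sum_b G i b).
Proof.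
rewrite !mulr_sumr -big_split; apply: eq_bigr => i _; by rewrite !mulr_sumr -big_split.
Qed.

Lemma sum2_comb (R : realType) (I J : finType) (c1 c2 : R) (F1 F2 F3 : I -> J -> R) :
  (forall i b, c1 * F1 i b + F2 i b = c2 * F3 i b) ->
  c1 * (\sum_i \sum_b F1 i b) + \sum_i \sum_b F2 i b = c2 * \sum_i \sum_b F3 i b.
Proof.
move=> H; rewrite !mulr_sumr -big_split; apply: eq_bigr => i _.
by rewrite !mulr_sumr -big_split; apply: eq_bigr => b _; apply: H.
Qed.

Lemma ring_ks (R : realType) (k s mm q d1 d2 : R) : k * s = 1 ->
  mm * (q * d1) + k * (mm * (q * (- s * d2))) = mm * (q * (d1 - d2)).
Proof.
move=> ks; transitivity (mm * (q * d1) - (k * s) * (mm * (q * d2))); first ring.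
by rewrite ks; ring.
Qed.

Theorem lemma13 (R : realType) (n m N : nat) (X : {set bitstr n})
  (f : bitstr n -> bool) (c : R) (v : bitstr n -> 'I_n -> 'cV[R]_m)
  (kappa : nat) (alpha : 'I_kappa -> bitstr n -> R) (eps : R) (S : 'M[R]_(N, m))
  (P : 'M[R]_(1 + n * N * 2)) :
  0 < c ->
  deciding X f v ->
  let A := vsize X v in
  kappa = \dim (psi_span X f c A v) ->
  let zeta j := \sum_(x in X | f x) alpha j x *: psi c A v x in
  (forall j k, dotv (zeta j) (zeta k) = (j == k)%:R) ->
  let C j i b := \sum_(x in X | f x && (x i == b))
                   (alpha j x / Num.sqrt (nu c A v x)) *: v x i in
  let inV (u : 'cV[R]_m) :=
    (exists j i b, u = C j i b) \/
    (exists y i, [/\ y \in X, f y = false & u = v y i]) in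
  0 < eps ->
  (forall u w, (inV u \/ u = 0) -> (inV w \/ w = 0) ->
     (1 - eps) * normv (u - w) ^+ 2 <= normv (S *m u - S *m w) ^+ 2 /\
     normv (S *m u - S *m w) ^+ 2 <= (1 + eps) * normv (u - w) ^+ 2) ->
  let T := @Tmap R n m N S in
  let psi' x := T *m psi c A v x in
  let phi' x := T *m phi c A v x in
  orth_proj <<[seq psi' x | x <- enum X & f x]>>%VS P ->
  let Rf := 2%:R *: P - 1%:M in
  eps * kappa%:R < 1 / 12%:R ->
  forall x, x \in X -> f x = false ->
    normv ((1%:M + Rf) *m phi' x) <= 8%:R * eps * (c + 1) * A * Num.sqrt kappa%:R.
Proof.
move=> cpos dec A kapE zeta ortho C inV epos JL T psi' phi' Pproj Rf small y yX fy.
have A0 : 0 <= A by apply: vsize_ge0.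
have RfE : (1%:M + Rf) *m phi' y = 2%:R *: (P *m phi' y).
  by rewrite /Rf addrC subrK scalemxAl.
rewrite RfE.
have [Az|Apos] := eqVneq A 0.
  have nf : forall x', x' \in X -> f x' = false.
    move=> x' x'X; apply/negbTE/negP => fx'.
    have := dec x' y x'X yX; rewrite fx' fy => /(_ isT).
    have v0 : forall i, v x' i = 0.
      have := @vsize_ub _ _ _ X v x' x'X; rewrite -/A Az => H.
      move=> i; apply: dotv_eq0; apply/eqP; rewrite eq_le dotv_ge0 andbT.
      apply: le_trans H; rewrite (bigD1 i) //= lerDl sumr_ge0 // => *; exact: dotv_ge0.
    rewrite big1 => [/eqP|i _]; first by rewrite eq_sym oner_eq0.
    by rewrite v0 dotv0l.
  have Wnil : [seq psi' x | x <- enum X & f x] = [::].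
    by rewrite (@eq_in_filter _ _ pred0) ?filter_pred0 // => z; rewrite mem_enum => /nf ->.
  have := (Pproj (phi' y)).1; rewrite Wnil span_nil memv0 => /eqP ->.
  by rewrite scaler0 Az mulr0 mul0r /normv dotv0l sqrtr0.
have Ap : 0 < A by rewrite lt_def Apos A0.
have cA : 0 < c * A by rewrite mulr_gt0.
set s := Num.sqrt (c * A).
have s0 : 0 < s by rewrite sqrtr_gt0.
set k := s^-1.
have ks : k * s = 1 by rewrite mulVf // gt_eqF.
have k2 : k ^+ 2 * (c * A) = 1 by rewrite -(sqr_sqrtr (ltW cA)) -/s -exprMn ks expr1n.
have psiunE : forall x, psi_un c A v x =
    mk 1 (fun i b => (x i == b)%:R *: (k *: v x i)).
  move=> x; rewrite /psi_un -/s -/k.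
  have -> : k *: \sum_i tket i (v x i) (x i) = \sum_i tket i (k *: v x i) (x i).
    by rewrite scaler_sumr; apply: eq_bigr => i _; rewrite tketZ.
  by rewrite -[hat0 R]scale1r mk1.
have psiE : forall x, psi c A v x = mk ((Num.sqrt (nu c A v x))^-1 * 1)
    (fun i b => (Num.sqrt (nu c A v x))^-1 *: ((x i == b)%:R *: (k *: v x i))).
  by move=> x; rewrite /psi psiunE mk_scale.
set a := fun j => \sum_(x in X | f x) alpha j x * ((Num.sqrt (nu c A v x))^-1 * 1).
have zetaE : forall j, zeta j = mk (a j) (fun i b => k *: C j i b).
  move=> j; rewrite /zeta.
  under eq_bigr do rewrite psiE mk_scale.
  rewrite mk_sum; apply: eq_mk => i b.
  rewrite /C scaler_sumr big_mkcond [RHS]big_mkcond /=; apply: eq_bigr => x _.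
  case: (_ \in _); case: (f x); case: (x i == b) => /=; rewrite ?scale0r ?scale1r ?scaler0 //.
  by rewrite !scalerA; congr (_ *: _); rewrite mulrA mulrC.
have phiunE : phi_un c A v y = mk 1 (fun i b => (~~ y i == b)%:R *: (- s *: v y i)).
  rewrite /phi_un -/s -mk1 scale1r; congr (_ + _).
  by rewrite scaler_sumr -sumrN; apply: eq_bigr => i _; rewrite tketZ scaleNr.
set mm := (Num.sqrt (mu c A v y))^-1.
have phiE : phi c A v y = mk (mm * 1) (fun i b => mm *: ((~~ y i == b)%:R *: (- s *: v y i))).
  by rewrite /phi phiunE mk_scale.
have mu1 : 1 <= mu c A v y.
  rewrite /mu phiunE dot_mk mulr1 lerDl; apply: sumr_ge0 => i _; apply: sumr_ge0 => b _.
  exact: dotv_ge0.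
have mm0 : 0 < mm by rewrite invr_gt0 sqrtr_gt0; apply: lt_le_trans mu1.
have mm1 : mm <= 1.
  rewrite invf_le1; last by rewrite sqrtr_gt0; apply: lt_le_trans mu1.
  by rewrite -sqrtr1 ler_sqrt //; apply: le_trans mu1.
set Z := fun j => T *m zeta j.
have ZE : forall j, Z j = mk (a j) (fun i b => S *m (k *: C j i b)).
  by move=> j; rewrite /Z zetaE T_mk.
have phi'E : phi' y = mk (mm * 1) (fun i b => S *m (mm *: ((~~ y i == b)%:R *: (- s *: v y i)))).
  by rewrite /phi' phiE T_mk.
have dist : forall u w, inV u -> inV w ->
    `|dotv (S *m u) (S *m w) - dotv u w| <= 2 * eps * (dotv u u + dotv w w).
  move=> u w hu hw; apply: distort => //; apply: JL; by [left | right].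
have inC : forall j i b, inV (C j i b) by move=> j i b; left; exists j, i, b.
have inv : forall i, inV (v y i) by move=> i; right; exists y, i.
set HC := fun j => \sum_i \sum_b dotv (C j i b) (C j i b).
have HC0 : forall j, 0 <= HC j.
  by move=> j; apply: sumr_ge0 => i _; apply: sumr_ge0 => b _; apply: dotv_ge0.
have norm_zeta : forall j, a j * a j + k ^+ 2 * HC j = 1.
  move=> j; have := ortho j j; rewrite eqxx zetaE dot_mk => E; rewrite -[RHS]/(true%:R) -E; congr (_ + _).
  rewrite /HC mulr_sumr; apply: eq_bigr => i _; rewrite mulr_sumr; apply: eq_bigr => b _.
  by rewrite dotvZl dotvZr mulrA expr2.
have HCk : forall j, k ^+ 2 * HC j <= 1.
  move=> j; have := norm_zeta j; have : 0 <= a j * a j by rewrite -expr2 sqr_ge0.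
  lra.
have HCle : forall j, HC j <= c * A.
  move=> j; have : c * A * (k ^+ 2 * HC j) <= c * A * 1 by apply: ler_wpM2l; [lra | apply: HCk].
  by rewrite mulr1 mulrA [c * A * _]mulrC k2 mul1r.
have gram : forall j l, `|dotv (Z j) (Z l) - (j == l)%:R| <= 4%:R * eps.
  move=> j l; rewrite -ortho !ZE !zetaE !dot_mk.
  rewrite (_ : forall p q r : R, p + q - (p + r) = q - r); last by move=> *; ring.
  rewrite -sumrB; under eq_bigr do rewrite -sumrB.
  apply: le_trans (_ : _ <= \sum_i \sum_b ((2 * eps * k ^+ 2) * dotv (C j i b) (C j i b)
         + (2 * eps * k ^+ 2) * dotv (C l i b) (C l i b))) _.
    apply: le_trans (ler_norm_sum _ _ _) _; apply: ler_sum => i _.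
    apply: le_trans (ler_norm_sum _ _ _) _; apply: ler_sum => b _.
    rewrite -!scalemxAr !dotvZl !dotvZr !mulrA -mulrBr normrM ger0_norm; last first.
      by rewrite mulr_ge0 // ltW // invr_gt0.
    have kk : 0 <= k * k by rewrite mulr_ge0 // ltW // invr_gt0.
    have H := dist _ _ (inC j i b) (inC l i b).
    apply: le_trans (ler_wpM2l kk H) _; rewrite le_eqVlt; apply/orP; left; apply/eqP; ring.
  rewrite sum2_lin -/(HC j) -/(HC l).
  have := HCk j; have := HCk l; have : 0 <= eps by lra.
  move=> e0 h1 h2.
  have : 2 * eps * (k ^+ 2 * HC j) <= 2 * eps * 1 by apply: ler_wpM2l; [lra | done].
  have : 2 * eps * (k ^+ 2 * HC l) <= 2 * eps * 1 by apply: ler_wpM2l; [lra | done].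
  rewrite !mulrA; lra.
have Zr : forall j, a j = \sum_i \sum_b (~~ y i == b)%:R * dotv (C j i b) (v y i).
  move=> j.
  under [RHS]eq_bigr => i _ do rewrite (sum_delta (~~ y i) (fun b => dotv (C j i b) (v y i))).
  rewrite /a /C.
  transitivity (\sum_(x in X | f x) \sum_(i | x i != y i)
                 (alpha j x / Num.sqrt (nu c A v x)) * dotv (v x i) (v y i)).
    apply: eq_bigr => x /andP [xX fx]; rewrite -mulr_sumr (dec x y xX yX) ?fx ?fy //.
    by rewrite !mulr1.
  rewrite (exchange_big_dep predT) //=; apply: eq_bigr => i _.
  rewrite dotv_suml; apply: eq_big => [x|x _]; last by rewrite dotvZl.
  by rewrite -andbA; case: (x i); case: (y i).
have bE : forall j, dotv (Z j) (phi' y) = mm * \sum_i \sum_b ((~~ y i == b)%:R *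
     (dotv (C j i b) (v y i) - dotv (S *m C j i b) (S *m v y i))).
  move=> j; rewrite ZE phi'E dot_mk Zr mulr1 mulrC; apply: sum2_comb => i b.
  by rewrite -!scalemxAr dotvZl !dotvZr ring_ks.
have bB : forall j, `|dotv (Z j) (phi' y)| <= 2 * eps * (c * A + A).
  move=> j; rewrite bE normrM ger0_norm ?(ltW mm0) //.
  apply: le_trans (ler_wpM2r (normr_ge0 _) mm1) _; rewrite mul1r.
  apply: le_trans (ler_norm_sum _ _ _) _.
  apply: le_trans (_ : _ <= \sum_i \sum_b (2 * eps * dotv (C j i b) (C j i b)
       + 2 * eps * ((~~ y i == b)%:R * dotv (v y i) (v y i)))) _.
    apply: ler_sum => i _; apply: le_trans (ler_norm_sum _ _ _) _; apply: ler_sum => b _.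
    have H := dist _ _ (inC j i b) (inv i).
    rewrite normrM; case: (_ == _) => /=; rewrite ?mulr1n ?mulr0n ?normr1 ?normr0 ?mul1r ?mul0r ?mulr0 ?addr0.
      by rewrite distrC -mulrDr.
    by apply: mulr_ge0; [lra | apply: dotv_ge0].
  rewrite sum2_lin -/(HC j).
  under eq_bigr => i _ do rewrite (sum_delta (~~ y i) (fun b => dotv (v y i) (v y i))).
  have h1 := HCle j; have h2 := @vsize_ub _ _ _ X v y yX; rewrite -/A in h2.
  have : 2 * eps * HC j <= 2 * eps * (c * A) by apply: ler_wpM2l; [lra | done].
  have : 2 * eps * (\sum_i dotv (v y i) (v y i)) <= 2 * eps * A by apply: ler_wpM2l; [lra | done].
  lra.
pose zt := [tuple zeta j | j < kappa].
have zt_nth : forall j : 'I_kappa, zt`_j = zeta j.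
  by move=> j; rewrite -tnth_nth tnth_mktuple.
have psi_in : forall x, x \in X -> f x -> psi c A v x \in psi_span X f c A v.
  by move=> x xX fx; apply: memv_span; apply: map_f; rewrite mem_filter fx mem_enum.
have zeta_in : forall j, zeta j \in psi_span X f c A v.
  move=> j; rewrite /zeta; apply: memv_suml => x /andP [xX fx]; apply: memvZ; exact: psi_in.
have zfree : free zt.
  apply/freeP => cc H j.
  have := congr1 (dotv (zeta j)) H; rewrite dotv_sumr dotv0r.
  under eq_bigr => l _ do rewrite zt_nth dotvZr ortho mulrC.
  by rewrite sum_delta.
have spanE : psi_span X f c A v = <<zt>>%VS.
  apply/eqP; rewrite eq_sym eqEdim; apply/andP; split.
    apply/span_subvP => w; rewrite /zt /= => /mapP [j _ ->]; exact: zeta_in.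
  by rewrite (eqP zfree) size_tuple -kapE leqnn.
have psi_zt : forall x, x \in X -> f x -> psi c A v x = \sum_j coord zt j (psi c A v x) *: zeta j.
  move=> x xX fx; have H : psi c A v x \in <<zt>>%VS by rewrite -spanE; exact: psi_in.
  by rewrite {1}(coord_span H); apply: eq_bigr => j _; rewrite zt_nth.
pose Zt := [tuple Z j | j < kappa].
have W_sub : (<<[seq psi' x | x <- enum X & f x]>> <= <<Zt>>)%VS.
  apply/span_subvP => w /mapP [x]; rewrite mem_filter mem_enum => /andP [fx xX] ->.
  rewrite /psi' (psi_zt x xX fx) mulmx_sumr; apply: memv_suml => j _.
  rewrite -scalemxAr; apply: memvZ; apply: memv_span.
  have -> : T *m zeta j = tnth Zt j by rewrite tnth_mktuple.
  exact: mem_tnth.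
have [pW orth] := Pproj (phi' y).
set p := P *m phi' y in pW orth *.
have pin : p \in <<Zt>>%VS by apply: (subvP W_sub).
set beta := fun j => coord Zt j p.
have pE : p = \sum_j beta j *: Z j.
  by rewrite {1}(coord_span pin); apply: eq_bigr => j _; rewrite -tnth_nth tnth_mktuple.
have D1 : dotv p p = dotv p (phi' y).
  by have := orth p pW; rewrite dotvBr => /eqP; rewrite subr_eq0 => /eqP.
have D2 : dotv p (phi' y) = \sum_j beta j * dotv (Z j) (phi' y).
  by rewrite {1}pE dotv_suml; apply: eq_bigr => j _; rewrite dotvZl.
have D3 : dotv p p = \sum_j \sum_l beta j * beta l * dotv (Z j) (Z l).
  rewrite {1}pE dotv_suml; apply: eq_bigr => j _; rewrite dotvZl pE dotv_sumr mulr_sumr.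
  by apply: eq_bigr => l _; rewrite dotvZr; ring.
set Bnd := 2 * eps * (c * A + A).
have Bnd0 : 0 <= Bnd by rewrite /Bnd !mulr_ge0 ?addr_ge0 ?mulr_ge0 //; lra.
have h1 : dotv p p <= (\sum_j `|beta j|) * Bnd.
  rewrite D1 D2 mulr_suml; apply: ler_sum => j _; apply: le_trans (ler_norm _) _.
  by rewrite normrM; apply: ler_wpM2l; [exact: normr_ge0 | exact: bB].
have h2 : \sum_j beta j ^+ 2 - 4%:R * eps * (\sum_j `|beta j|) ^+ 2 <= dotv p p.
  rewrite D3; have := @gram_lb _ kappa beta (fun j l => dotv (Z j) (Z l)) (4%:R * eps) gram; exact.
have h3 : (\sum_j `|beta j|) ^+ 2 <= kappa%:R * \sum_j beta j ^+ 2.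
  have := cs_sum (fun j => `|beta j|).
  move=> H; apply: le_trans H _; rewrite le_eqVlt; apply/orP; left; apply/eqP; congr (_ * _).
  by apply: eq_bigr => j _; rewrite -normrX ger0_norm ?sqr_ge0.
have hD := final_alg h1 h2 h3 small epos (sumr_ge0 _ (fun j _ => normr_ge0 (beta j))) Bnd0 (ler0n _ _).
set Y := kappa%:R * (eps * (c + 1) * A) ^+ 2.
have Y0 : 0 <= Y by rewrite mulr_ge0 ?sqr_ge0.
have hD' : dotv p p <= 6%:R * Y.
  apply: le_trans hD _; rewrite le_eqVlt; apply/orP; left; apply/eqP; rewrite /Bnd /Y; field; done.
have RHS0 : 0 <= 8%:R * eps * (c + 1) * A * Num.sqrt kappa%:R.
  by rewrite !mulr_ge0 ?sqrtr_ge0 //; lra.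
have E64 : Num.sqrt (64%:R * Y) = 8%:R * eps * (c + 1) * A * Num.sqrt kappa%:R.
  rewrite -(ger0_norm RHS0) -sqrtr_sqr; congr Num.sqrt.
  by rewrite /Y !exprMn sqr_sqrtr ?ler0n //; ring.
apply: (@le_trans _ _ (Num.sqrt (64%:R * Y))); last by rewrite E64.
rewrite /normv ler_sqrt ?mulr_ge0 //.
rewrite dotvZl dotvZr. all: lra.
Qed.
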